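(* Consider the algorithm described in the context, and suppose it does not terminate finitely. Then for every $k\in\mathbb{N}$, $$\Delta q_k(s_k,\tau_k)\ge \frac{\sigma_u\tau_k}{\alpha_k}\|s_k\|_2^2+\sigma_c\big(\|c_k\|_2-\|c_k+J_kv_k\|_2\big)>0$$ and $$D_{\Phi_{\tau_k}}(x_k,s_k)\le -\frac{\sigma_u\tau_k}{\alpha_k}\|s_k\|_2^2-\sigma_c\big(\|c_k\|_2-\|c_k+J_kv_k\|_2\big)<0,$$ where $D_{\Phi_\tau}(x,s):=\lim_{t\searrow0}(\Phi_\tau(x+ts)-\Phi_\tau(x))/t$.
   Context: Problem: $\min_{x\in\mathbb{R}^n} f(x)+r(x)$ subject to $c(x)=0$, where $f:\mathbb{R}^n\to\mathbb{R}$ and $c:\mathbb{R}^n\to\mathbb{R}^m$ ($m\le n$) are continuously differentiable and $r:\mathbb{R}^n\to\mathbb{R}_{\ge 0}$ is convex. Write $g(x)=\nabla f(x)$, $J(x)=\nabla c(x)^T$, and $f_k=f(x_k)$, $g_k=g(x_k)$, $c_k=c(x_k)$, $J_k=J(x_k)$, $r_k=r(x_k)$. All norms are Euclidean. Merit function: $\Phi_\tau(x)=\tau(f(x)+r(x))+\|c(x)\|_2$. Algorithm: inputs $x_0$, $\alpha_0>0$, $\tau_{-1}>0$; constants $\kappa_v>0$, $\sigma_c,\epsilon_\tau,\xi,\eta\in(0,1)$, $\sigma_u\in(0,1/2]$, $\bar\sigma_u:=\sigma_u+\tfrac12$. For $k=0,1,\dots$: 1. If $J_k^Tc_k\ne0$,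 compute $v_k$ with $v_k\in\mathrm{Range}(J_k^T)$, $\|v_k\|_2\le\kappa_v\alpha_k\|J_k^Tc_k\|_2$, $\|c_k+J_kv_k\|_2\le\|c_k+J_kv_k^c\|_2$, where $v_k^c=-\beta_k^cJ_k^Tc_k$ with $\beta_k^c$ minimizing $\tfrac12\|c_k-\beta J_kJ_k^Tc_k\|_2^2$ over $0\le\beta\le\kappa_v\alpha_k$. Otherwise set $v_k=0$, and if $c_k\ne0$ terminate. 2. Let $u_k$ be the unique minimizer of $g_k^Tu+\tfrac1{2\alpha_k}\|u\|_2^2+r(x_k+v_k+u)$ subject to $J_ku=0$; set $s_k=v_k+u_k$. If $s_k=0$, terminate. 3. Let $D_k:=g_k^Ts_k+\bar\sigma_u\|s_k\|_2^2/\alpha_k+r(x_k+s_k)-r_k$; $\tau_{k,\mathrm{trial}}=\infty$ if $D_k\le0$, else $\tau_{k,\mathrm{trial}}=(1-\sigma_c)(\|c_k\|_2-\|c_k+J_kv_k\|_2)/D_k$. Set $\tau_k=\tau_{k-1}$ if $\tau_{k-1}\le\tau_{k,\mathrm{trial}}$, else $\tau_k=\min\{(1-\epsilon_\tau)\tau_{k-1},\tau_{k,\mathrm{trial}}\}$. 4. With $\Delta q_k(s,\tau):=-\tau(g_k^Ts+\tfrac1{2\alpha_k}\|s\|_2^2+r(x_k+s)-r_k)+\|c_k\|_2-\|c_k+J_ks\|_2$: if $\Phi_{\tau_k}(x_k+s_k)\le\Phi_{\tau_k}(x_k)-\eta\Delta q_k(s_k,\tau_k)$ set $x_{k+1}=x_k+s_k$,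 $\alpha_{k+1}=\alpha_k$; else $x_{k+1}=x_k$, $\alpha_{k+1}=\xi\alpha_k$. Standing assumption: there is an open convex set $\mathcal X$ containing all iterates $x_k$ and trial points $x_k+s_k$ such that $f$ is bounded below on $\mathcal X$, $\nabla f$ is bounded and Lipschitz continuous on $\mathcal X$, $c$ is bounded on $\mathcal X$, $J$ is bounded and Lipschitz continuous on $\mathcal X$, and all subgradients of $r$ at points of $\mathcal X$ are uniformly bounded in norm. *)

(* Defs.v *)
(* points of R^n are column vectors 'cV[R]_n. *)
From HB Require Import structures.
From mathcomp Require Import all_boot all_order all_algebra.
From mathcomp Require Import all_classical all_reals all_analysis.
Set Implicit Arguments. Unset Strict Implicit. Unset Printing Implicit Defensive.
Import Order.TTheory GRing.Theory Num.Theory.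
Import numFieldNormedType.Exports.
Local Open Scope ring_scope.

Definition dotv {R : realType} {n : nat} (u w : 'cV[R]_n) : R :=
  \sum_(i < n) u i 0 * w i 0.
Definition enorm {R : realType} {n : nat} (u : 'cV[R]_n) : R :=
  Num.sqrt (dotv u u).
(* Frobenius norm of a matrix (used only to express "J is bounded / Lipschitz") *)
Definition fnorm {R : realType} {m n : nat} (A : 'M[R]_(m, n)) : R :=
  Num.sqrt (\sum_(i < m) \sum_(j < n) A i j ^+ 2).

Definition convex_fn {R : realType} {n : nat} (r : 'cV[R]_n -> R) : Prop :=
  forall (y z : 'cV[R]_n) (t : R), 0 <= t -> t <= 1 ->
    r (t *: y + (1 - t) *: z) <= t * r y + (1 - t) * r z.
Definition convex_setv {R : realType} {n : nat} (X : set 'cV[R]_n) : Prop :=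
  forall (y z : 'cV[R]_n) (t : R), X y -> X z -> 0 <= t -> t <= 1 ->
    X (t *: y + (1 - t) *: z).
Definition subgrad {R : realType} {n : nat} (r : 'cV[R]_n -> R) (y d : 'cV[R]_n) : Prop :=
  forall z, r y + dotv d (z - y) <= r z.

Definition merit {R : realType} {n m : nat} (f r : 'cV[R]_n -> R)
  (c : 'cV[R]_n -> 'cV[R]_m) (tau : R) (y : 'cV[R]_n) : R :=
  tau * (f y + r y) + enorm (c y).

Definition dq {R : realType} {n m : nat} (r : 'cV[R]_n -> R) (xk gk : 'cV[R]_n)
  (ck : 'cV[R]_m) (Jk : 'M[R]_(m, n)) (alphak : R) (s : 'cV[R]_n) (tau : R) : R :=
  - tau * (dotv gk s + (enorm s) ^+ 2 / (2 * alphak) + r (xk + s) - r xk)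
  + enorm ck - enorm (ck + Jk *m s).

(* tau_{k-1}, with tau_{-1} = taum1 *)
Definition tau_prev {R : realType} (taum1 : R) (tau : nat -> R) (k : nat) : R :=
  if k is k'.+1 then tau k' else taum1.

Definition Dk {R : realType} {n : nat} (r : 'cV[R]_n -> R) (xk gk sk : 'cV[R]_n)
  (alphak sigma_u : R) : R :=
  dotv gk sk + (sigma_u + 1 / 2) * (enorm sk) ^+ 2 / alphak + r (xk + sk) - r xk.

Definition tau_trial {R : realType} (D sigma_c normc normcv : R) : \bar R :=
  if D <= 0 then +oo%E else ((1 - sigma_c) * (normc - normcv) / D)%:E.

Definition tau_update {R : realType} (taup eps_tau : R) (trial : \bar R) : R :=
  if (taup%:E <= trial)%E then taup else Num.min ((1 - eps_tau) * taup) (fine trial).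

(* Main.v *)
Require Import Defs.
From HB Require Import structures.
From mathcomp Require Import all_boot all_order all_algebra.
From mathcomp Require Import all_classical all_reals all_analysis.
From mathcomp Require Import ring lra.
Import Order.TTheory GRing.Theory Num.Theory.
Import numFieldNormedType.Exports.
Local Open Scope classical_set_scope.
Local Open Scope ring_scope.


Section V.
Variables (R : realType) (n : nat).
Implicit Types (u w : 'cV[R]_n) (a : R).

Lemma dotvC u w : dotv u w = dotv w u.
Proof. by rewrite /dotv; apply: eq_bigr => i _; rewrite mulrC. Qed.
Lemma dotvDr u w z : dotv u (w + z) = dotv u w + dotv u z.
Proof. by rewrite /dotv -big_split; apply: eq_bigr => i _; rewrite !mxE mulrDr. Qed.
Lemma dotvDl u w z : dotv (w + z) u = dotv w u + dotv z u.
Proof. by rewrite dotvC dotvDr !(dotvC u). Qed.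
Lemma dotvZr u w a : dotv u (a *: w) = a * dotv u w.
Proof. by rewrite /dotv mulr_sumr; apply: eq_bigr => i _; rewrite !mxE mulrCA. Qed.
Lemma dotvZl u w a : dotv (a *: w) u = a * dotv w u.
Proof. by rewrite dotvC dotvZr dotvC. Qed.
Lemma dotv0r u : dotv u 0 = 0.
Proof. by rewrite /dotv big1 // => i _; rewrite mxE mulr0. Qed.
Lemma dotv0l u : dotv 0 u = 0.
Proof. by rewrite dotvC dotv0r. Qed.
Lemma dotvNr u w : dotv u (- w) = - dotv u w.
Proof. by rewrite -scaleN1r dotvZr mulN1r. Qed.
Lemma dotvNl u w : dotv (- w) u = - dotv w u.
Proof. by rewrite dotvC dotvNr dotvC. Qed.
Lemma dotv_ge0 u : 0 <= dotv u u.
Proof. by rewrite /dotv sumr_ge0 // => i _; rewrite -expr2 sqr_ge0. Qed.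
Lemma dotv_eq0 u : dotv u u = 0 -> u = 0.
Proof.
move=> /eqP; rewrite /dotv psumr_eq0 => [/allP H|i _]; last by rewrite -expr2 sqr_ge0.
apply/matrixP => i j; rewrite (ord1 j) mxE.
have := H i (mem_index_enum _); rewrite -expr2 sqrf_eq0 => /eqP //.
Qed.
Lemma enorm_ge0 u : 0 <= enorm u.
Proof. exact: sqrtr_ge0. Qed.
Lemma enorm_sq u : enorm u ^+ 2 = dotv u u.
Proof. by rewrite /enorm sqr_sqrtr // dotv_ge0. Qed.
Lemma dotv_expand u w a :
  dotv (u + a *: w) (u + a *: w) = dotv u u + 2 * a * dotv u w + a ^+ 2 * dotv w w.
Proof.
rewrite !dotvDl !dotvDr !dotvZl !dotvZr (dotvC w u); ring.
Qed.
Lemma dotv_mulmx m (c : 'cV[R]_m) (J : 'M[R]_(m, n)) w :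
  dotv c (J *m w) = dotv (J^T *m c) w.
Proof.
rewrite /dotv; under eq_bigr do rewrite mxE big_distrr.
under [RHS]eq_bigr do rewrite mxE big_distrl.
rewrite exchange_big /=; apply: eq_bigr => i _; apply: eq_bigr => j _.
by rewrite mxE; ring.
Qed.
Lemma CS u w : dotv u w <= enorm u * enorm w.
Proof.
have [w0|wn0] := eqVneq (dotv w w) 0.
  by rewrite (dotv_eq0 _ w0) dotv0r mulr_ge0 // enorm_ge0.
have Wp : 0 < dotv w w by rewrite lt_def wn0 dotv_ge0.
have H := dotv_ge0 (u + (- (dotv u w / dotv w w)) *: w).
rewrite dotv_expand in H.
have H2 : dotv u w ^+ 2 <= dotv u u * dotv w w.
  have : 0 <= dotv w w * (dotv u u + 2 * - (dotv u w / dotv w w) * dotv u w +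
     (- (dotv u w / dotv w w)) ^+ 2 * dotv w w) by rewrite mulr_ge0 // ltW.
  have -> : dotv w w * (dotv u u + 2 * - (dotv u w / dotv w w) * dotv u w +
     (- (dotv u w / dotv w w)) ^+ 2 * dotv w w) = dotv u u * dotv w w - dotv u w ^+ 2.
    by field; rewrite wn0.
  by rewrite subr_ge0.
rewrite /enorm -sqrtrM ?dotv_ge0 //.
apply: (le_trans (ler_norm _)).
by rewrite -sqrtr_sqr ler_sqrt // mulr_ge0 ?dotv_ge0.
Qed.
Lemma enormD u w : enorm (u + w) <= enorm u + enorm w.
Proof.
rewrite -(ler_pXn2r (isT : (0 < 2)%N)) ?nnegrE ?addr_ge0 ?enorm_ge0 //.
rewrite enorm_sq; have := dotv_expand u w 1; rewrite scale1r expr1n mulr1 mul1r => ->.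
rewrite sqrrD !enorm_sq; have := CS u w; lra.
Qed.
Lemma enormZ u a : enorm (a *: u) = `|a| * enorm u.
Proof.
by rewrite /enorm dotvZl dotvZr mulrA sqrtrM ?sqr_ge0 // -expr2 sqrtr_sqr.
Qed.
Lemma enormN u : enorm (- u) = enorm u.
Proof. by rewrite -scaleN1r enormZ normrN normr1 mul1r. Qed.
Lemma enorm_dist u w : `|enorm u - enorm w| <= enorm (u - w).
Proof.
rewrite ler_norml; apply/andP; split.
  have := enormD (w - u) u; rewrite subrK -opprB enormN; lra.
have := enormD (u - w) w; rewrite subrK; lra.
Qed.
Lemma enorm_eq0 u : enorm u = 0 -> u = 0.
Proof. by move=> H; apply: dotv_eq0; rewrite -enorm_sq H expr2 mulr0. Qed.
End V.
Lemma convex_quot (R : realType) (phi : R -> R) :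
 (forall a b l, 0 <= l -> l <= 1 -> phi (l * a + (1 - l) * b) <= l * phi a + (1 - l) * phi b) ->
 exists L, (fun t => (phi t - phi 0) / t) @ 0^'+ --> L /\ L <= phi 1 - phi 0.
Proof.
move=> hc; set q := fun t => (phi t - phi 0) / t.
have mono : forall t1 t2, 0 < t1 -> t1 <= t2 -> q t1 <= q t2.
  move=> t1 t2 t10 t12; have t20 : 0 < t2 by apply: lt_le_trans t12.
  have := hc t2 0 (t1 / t2); rewrite mulr0 addr0 divfK ?gt_eqF //.
  move=> /(_ (divr_ge0 (ltW t10) (ltW t20))).
  rewrite ler_pdivrMr // mul1r => /(_ t12) H.
  rewrite /q ler_pdivrMr // mulrAC -mulrA.
  have -> : t1 * t2^-1 = t1 / t2 by [].
  set l := t1 / t2 in H *; rewrite mulrC; lra.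
have lb : forall t, 0 < t -> phi 0 - phi (-1) <= q t.
  move=> t t0; have t1 : 0 < 1 + t by lra.
  have hne : 1 + t != 0 by rewrite gt_eqF.
  have E0 : 1 / (1 + t) * t + (1 - 1 / (1 + t)) * -1 = 0.
    by field; exact: hne.
  have E : (1 - 1 / (1 + t)) = t / (1 + t) by field; exact: hne.
  have l0 : 0 <= 1 / (1 + t) by rewrite divr_ge0 ?ler01 ?ltW.
  have l1 : 1 / (1 + t) <= 1 by rewrite ler_pdivrMr // mul1r; lra.
  have H := hc t (-1) (1 / (1 + t)) l0 l1.
  rewrite E0 E in H.
  have H2 : (1 + t) * phi 0 <= phi t + t * phi (-1).
    have := ler_pM2r t1; move=> /(_ (phi 0) (1 / (1 + t) * phi t + t / (1 + t) * phi (-1))).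
    rewrite H => /esym; rewrite mulrDl.
    have -> : 1 / (1 + t) * phi t * (1 + t) = phi t by field; exact: hne.
    have -> : t / (1 + t) * phi (-1) * (1 + t) = t * phi (-1) by field; exact: hne.
    by rewrite mulrC.
  rewrite /q ler_pdivlMr //; lra.
have ab : (BRight (0:R) < BLeft 2)%O by rewrite bnd_simp.
have hnd : {in Interval (BRight (0:R)) (BLeft 2) &, nondecreasing_fun q}.
  move=> a b; rewrite !in_itv /= => /andP[a0 _] _ ab'; exact: mono.
have hlb : has_lbound (q @` [set` Interval (BRight (0:R)) (BLeft 2)]).
  exists (phi 0 - phi (-1)) => y [t]; rewrite /= in_itv /= => /andP[t0 _] <-.
  exact: lb.
have := nondecreasing_at_right_cvgr ab hnd hlb.
set L := inf _ => HL; exists L; split; first exact: HL.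
have : q 1 = phi 1 - phi 0 by rewrite /q divr1.
move=> <-; apply: ge_inf => //; exists 1 => //=; rewrite in_itv /=; lra.
Qed.
Lemma sc_real (R : realType) (G b R1 R0 : R) : 0 <= b ->
 (forall t, 0 <= t -> t < 1 -> G + b + R1 <= t * G + t ^+ 2 * b + (t * R1 + (1 - t) * R0)) ->
 G + R1 - R0 + 2 * b <= 0.
Proof.
move=> b0 H.
have H0 := H 0 (lexx 0) ltr01.
rewrite expr0n /= !mul0r !add0r subr0 mul1r in H0.
rewrite leNgt; apply/negP => Hp.
have bp : 0 < b by lra.
set e := G + R1 - R0 + 2 * b in Hp.
set d := e / (2 * b).
have de : d * (2 * b) = e by rewrite /d divfK // gt_eqF // mulr_gt0 // ltr0n.
have d0 : 0 < d by rewrite /d divr_gt0 // mulr_gt0 // ltr0n.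
have d1 : d <= 1 by rewrite /d ler_pdivrMr ?mul1r ?mulr_gt0 ?ltr0n //; rewrite /e; lra.
have := H (1 - d); rewrite subr_ge0 d1 => /(_ isT).
have -> : 1 - d < 1 by lra.
move=> /(_ isT) Ht.
have : d * e <= d * (d * b) by rewrite /e; nra.
have : d * (d * b) = d * e / 2.
  by rewrite -de; field.
nra.
Qed.

Lemma tau_update_le (R : realType) (taup eps T : R) : tau_update taup eps T%:E <= T.
Proof.
rewrite /tau_update lee_fin; case: ifP => // _; by rewrite ge_min lexx orbT.
Qed.

Lemma tau_update_pos (R : realType) (taup eps D sc nc ncv : R) :
  0 < taup -> 0 < eps < 1 -> 0 < sc < 1 -> (D <= 0 \/ 0 < nc - ncv) ->
  0 < tau_update taup eps (tau_trial D sc nc ncv).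
Proof.
move=> tp /andP[e0 e1] /andP[s0 s1] hD; rewrite /tau_trial.
case: ifP => hD0; first by rewrite /tau_update leey.
have Dp : 0 < D by rewrite ltNge hD0.
have Hp : 0 < nc - ncv by case: hD => // h; rewrite h in hD0.
rewrite /tau_update; case: ifP => // _ /=.
rewrite lt_min; apply/andP; split; first by apply: mulr_gt0 => //; lra.
by apply: divr_gt0 => //; apply: mulr_gt0 => //; lra.
Qed.

Lemma mx_entry_le (R : realType) m n (u : 'M[R]_(m, n)) i j : `|u i j| <= `|u|.
Proof.
have -> : `|u| = mx_norm u by [].
by rewrite mx_normrE; apply/bigmax_geP; right => /=; exists (i, j).
Qed.

Lemma enorm_le_mx (R : realType) n (u : 'cV[R]_n) : enorm u <= n%:R * `|u|.
Proof.
have H1 : dotv u u <= n%:R * (`|u| * `|u|).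
  rewrite /dotv mulr_natl -[X in _ *+ X]card_ord -sumr_const; apply: ler_sum => i _.
  apply: le_trans (ler_norm _) _; rewrite normrM.
  by apply: ler_pM; rewrite ?normr_ge0 ?mx_entry_le.
have H2 : (n%:R : R) <= n%:R ^+ 2.
  by rewrite -natrX ler_nat; case: n {u H1} => // k; rewrite expnS leq_pmulr.
have M0 : 0 <= `|u| * `|u| by rewrite mulr_ge0.
rewrite /enorm -(ger0_norm (mulr_ge0 (ler0n _ n) (normr_ge0 u))) -sqrtr_sqr.
rewrite ler_sqrt ?sqr_ge0 //; apply: le_trans H1 _.
by rewrite exprMn expr2 [X in _ <= _ * X]expr2 ler_wpM2r.
Qed.

Lemma Dk_nonpos (R : realType) n m (r : 'cV[R]_n -> R) (J : 'M[R]_(m, n))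
  (x g u : 'cV[R]_n) (a su : R) :
  0 < a -> su <= 1 / 2 -> convex_fn r -> J *m u = 0 ->
  (forall w, J *m w = 0 -> dotv g u + enorm u ^+ 2 / (2 * a) + r (x + u)
       <= dotv g w + enorm w ^+ 2 / (2 * a) + r (x + w)) ->
  Dk r x g u a su <= 0.
Proof.
move=> a0 hsu hrc hJu hopt.
set b := dotv u u / (2 * a).
have b0 : 0 <= b by rewrite /b divr_ge0 ?dotv_ge0 // mulr_ge0 // ltW.
have H := @sc_real R (dotv g u) b (r (x + u)) (r x) b0.
have /H H2 : forall t, 0 <= t -> t < 1 -> dotv g u + b + r (x + u) <=
    t * dotv g u + t ^+ 2 * b + (t * r (x + u) + (1 - t) * r x).
  move=> t t0 t1.
  have Jw : J *m (t *: u) = 0 by rewrite -scalemxAr hJu scaler0.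
  have := hopt _ Jw; rewrite !enorm_sq dotvZl dotvZr dotvZr mulrA -expr2.
  have hc := hrc (x + u) x t t0 (ltW t1).
  have E1 : t *: (x + u) + (1 - t) *: x = x + t *: u.
    by apply/matrixP => i j; rewrite !mxE; ring.
  rewrite E1 in hc.
  move=> Hle; rewrite /b -mulrA; apply: (le_trans Hle); lra.
rewrite /Dk enorm_sq.
have E : dotv g u + (su + 1 / 2) * dotv u u / a + r (x + u) - r x =
   (dotv g u + r (x + u) - r x + 2 * b) + (su - 1 / 2) * (dotv u u / a).
  by rewrite /b; field; rewrite gt_eqF.
rewrite E; have : (su - 1 / 2) * (dotv u u / a) <= 0.
  by apply: mulr_le0_ge0; [lra | rewrite divr_ge0 ?dotv_ge0 // ltW].
lra.
Qed.

Lemma cauchy_dec (R : realType) n m (c : 'cV[R]_m) (J : 'M[R]_(m, n)) (v : 'cV[R]_n) (ka : R) :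
  0 < ka -> J^T *m c != 0 ->
  (exists betac : R, 0 <= betac <= ka /\
     (forall beta : R, 0 <= beta <= ka ->
        (enorm (c - betac *: (J *m J^T *m c))) ^+ 2 / 2
        <= (enorm (c - beta *: (J *m J^T *m c))) ^+ 2 / 2) /\
     enorm (c + J *m v) <= enorm (c + J *m (- betac *: (J^T *m c)))) ->
  enorm (c + J *m v) < enorm c.
Proof.
move=> ka0 p0 [bc [_ [hmin hv]]].
set p := J^T *m c in p0 hv.
have qE : J *m J^T *m c = J *m p by rewrite -mulmxA.
rewrite qE in hmin; set q := J *m p in hmin.
have P0 : 0 < dotv p p.
  rewrite lt_def dotv_ge0 andbT; apply/eqP => /dotv_eq0 h; by rewrite h eqxx in p0.
have cq : dotv c q = dotv p p by rewrite /q dotv_mulmx.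
have Q0 := @dotv_ge0 _ _ q.
set P := dotv p p in P0 cq; set Q := dotv q q in Q0.
set b0 := Num.min ka (P / (Q + 1)).
have b0p : 0 < b0 by rewrite lt_min ka0 /= divr_gt0 //; lra.
have b0k : b0 <= ka by rewrite ge_min lexx.
have b0P : b0 * (Q + 1) <= P.
  by rewrite -ler_pdivlMr ?ge_min ?lexx ?orbT //; lra.
have := hmin b0; rewrite ltW //= b0k => /(_ isT).
rewrite -!scaleNr !enorm_sq !dotv_expand cq -/Q => H.
have hlt : enorm (c + (- bc) *: q) < enorm c.
  rewrite -(ltr_pXn2r (isT : (0 < 2)%N)) ?nnegrE ?enorm_ge0 //.
  rewrite !enorm_sq dotv_expand cq -/Q.
  have : b0 * (b0 * Q) < b0 * P by rewrite ltr_pM2l //; nra.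
  nra.
apply: le_lt_trans hv _.
by rewrite -scalemxAr -/q.
Qed.

Theorem lemma3p4 (R : realType) (n m : nat)
  (f : 'cV[R]_n -> R) (g : 'cV[R]_n -> 'cV[R]_n)
  (c : 'cV[R]_n -> 'cV[R]_m) (J : 'cV[R]_n -> 'M[R]_(m, n))
  (r : 'cV[R]_n -> R)
  (kappa_v sigma_c eps_tau xi eta sigma_u taum1 : R)
  (x v u s : nat -> 'cV[R]_n) (alpha tau : nat -> R) :
  (* problem data *)
  (m <= n)%N ->
  (forall y, differentiable f y) -> (forall y h, 'd f y h = dotv (g y) h) ->
  continuous g ->
  (forall y, differentiable c y) -> (forall y h, 'd c y h = J y *m h) ->
  continuous J ->
  (forall y, 0 <= r y) -> convex_fn r ->
  (* standing assumption *)
  (exists X : set 'cV[R]_n,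
      open X /\ convex_setv X /\
      (forall k, X (x k) /\ X (x k + s k)) /\
      (exists lb, forall y, X y -> lb <= f y) /\
      (exists M, forall y, X y -> enorm (g y) <= M) /\
      (exists L, forall y z, X y -> X z -> enorm (g y - g z) <= L * enorm (y - z)) /\
      (exists M, forall y, X y -> enorm (c y) <= M) /\
      (exists M, forall y, X y -> fnorm (J y) <= M) /\
      (exists L, forall y z, X y -> X z -> fnorm (J y - J z) <= L * enorm (y - z)) /\
      (exists M, forall y d, X y -> subgrad r y d -> enorm d <= M)) ->
  (* inputs and constants *)
  0 < alpha 0 -> 0 < taum1 -> 0 < kappa_v ->
  0 < sigma_c < 1 -> 0 < eps_tau < 1 -> 0 < xi < 1 -> 0 < eta < 1 ->
  0 < sigma_u <= 1 / 2 ->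
  (* step 1 *)
  (forall k,
     ((J (x k))^T *m c (x k) != 0 ->
        (exists w, v k = (J (x k))^T *m w) /\
        enorm (v k) <= kappa_v * alpha k * enorm ((J (x k))^T *m c (x k)) /\
        (exists betac : R,
           0 <= betac <= kappa_v * alpha k /\
           (forall beta : R, 0 <= beta <= kappa_v * alpha k ->
              (enorm (c (x k) - betac *: (J (x k) *m (J (x k))^T *m c (x k)))) ^+ 2 / 2
              <= (enorm (c (x k) - beta *: (J (x k) *m (J (x k))^T *m c (x k)))) ^+ 2 / 2) /\
           enorm (c (x k) + J (x k) *m v k)
           <= enorm (c (x k) + J (x k) *m (- betac *: ((J (x k))^T *m c (x k)))))) /\
     ((J (x k))^T *m c (x k) = 0 -> v k = 0)) ->
  (* step 2 *)
  (forall k,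
     J (x k) *m u k = 0 /\
     (forall w, J (x k) *m w = 0 ->
        dotv (g (x k)) (u k) + (enorm (u k)) ^+ 2 / (2 * alpha k) + r (x k + v k + u k)
        <= dotv (g (x k)) w + (enorm w) ^+ 2 / (2 * alpha k) + r (x k + v k + w)) /\
     s k = v k + u k) ->
  (* the algorithm does not terminate finitely *)
  (forall k, ((J (x k))^T *m c (x k) = 0 -> c (x k) = 0) /\ s k != 0) ->
  (* step 3 *)
  (forall k,
     tau k = tau_update (tau_prev taum1 tau k) eps_tau
               (tau_trial (Dk r (x k) (g (x k)) (s k) (alpha k) sigma_u) sigma_c
                  (enorm (c (x k))) (enorm (c (x k) + J (x k) *m v k)))) ->
  (* step 4 *)
  (forall k,
     if merit f r c (tau k) (x k + s k)
        <= merit f r c (tau k) (x k)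
           - eta * dq r (x k) (g (x k)) (c (x k)) (J (x k)) (alpha k) (s k) (tau k)
     then x k.+1 = x k + s k /\ alpha k.+1 = alpha k
     else x k.+1 = x k /\ alpha k.+1 = xi * alpha k) ->
  forall k,
    let bnd := sigma_u * tau k / alpha k * (enorm (s k)) ^+ 2
               + sigma_c * (enorm (c (x k)) - enorm (c (x k) + J (x k) *m v k)) in
    (bnd <= dq r (x k) (g (x k)) (c (x k)) (J (x k)) (alpha k) (s k) (tau k) /\ 0 < bnd) /\
    (exists DPhi : R,
       (fun t : R => (merit f r c (tau k) (x k + t *: s k) - merit f r c (tau k) (x k)) / t)
         @ at_right 0 --> DPhi /\
       DPhi <= - bnd /\ - bnd < 0).
Proof.
move=> hmn hdf hdfg hgc hdc hdcJ hJc hr0 hrc _ ha0 htm1 hkv hsc heps hxi heta hsu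
  step1 step2 nonterm step3 step4.
have apos : forall k, 0 < alpha k.
  elim => // k IH; have := step4 k; case: ifP => _ [_ ->] //.
  by apply: mulr_gt0 => //; case/andP: hxi.
have key : forall k, 0 <= enorm (c (x k)) - enorm (c (x k) + J (x k) *m v k) /\
   (Dk r (x k) (g (x k)) (s k) (alpha k) sigma_u <= 0 \/
    0 < enorm (c (x k)) - enorm (c (x k) + J (x k) *m v k)).
  move=> k; have [hJ0 | hJn] := eqVneq ((J (x k))^T *m c (x k)) 0.
    have v0 : v k = 0 by apply: (step1 k).2.
    have [hu [hopt hs]] := step2 k.
    rewrite v0 mulmx0 addr0 subrr lexx; split => //; left.
    rewrite hs v0 add0r; apply: (@Dk_nonpos R n m r (J (x k)) (x k) (g (x k)) (u k) (alpha k) sigma_u (apos k) _ hrc hu).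
    - by case/andP: hsu.
    - by move=> w hw; have := hopt w hw; rewrite v0 !addr0.
  have hlt : enorm (c (x k) + J (x k) *m v k) < enorm (c (x k)).
    have [_ [_ hb]] := (step1 k).1 hJn.
    exact: (@cauchy_dec R n m _ _ _ _ (mulr_gt0 hkv (apos k)) hJn hb).
  by split; [rewrite subr_ge0; exact: ltW | right; rewrite subr_gt0].
have tpos : forall k, 0 < tau k.
  elim => [|k IH]; rewrite step3 /=; apply: tau_update_pos => //; exact: (key _).2.
move=> k bnd.
have a0 := apos k; have t0 := tpos k.
have [dc0 hD] := key k.
have [hu [hopt hs]] := step2 k.
have Js : J (x k) *m s k = J (x k) *m v k by rewrite hs mulmxDr hu addr0.
have dqE : dq r (x k) (g (x k)) (c (x k)) (J (x k)) (alpha k) (s k) (tau k) =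
  - (tau k * Dk r (x k) (g (x k)) (s k) (alpha k) sigma_u)
  + sigma_u * tau k / alpha k * enorm (s k) ^+ 2
  + (enorm (c (x k)) - enorm (c (x k) + J (x k) *m v k)).
  by rewrite /dq /Dk Js; field; rewrite gt_eqF.
have tauD : tau k * Dk r (x k) (g (x k)) (s k) (alpha k) sigma_u <=
    (1 - sigma_c) * (enorm (c (x k)) - enorm (c (x k) + J (x k) *m v k)).
  have sc1 : 0 <= 1 - sigma_c by case/andP: hsc => _ ?; lra.
  have hm := mulr_ge0 sc1 dc0.
  case: (lerP (Dk r (x k) (g (x k)) (s k) (alpha k) sigma_u) 0) => hD0.
    have : tau k * Dk r (x k) (g (x k)) (s k) (alpha k) sigma_u <= 0.
      by rewrite pmulr_rle0.
    lra.
  have ht : tau k <= (1 - sigma_c) * (enorm (c (x k)) - enorm (c (x k) + J (x k) *m v k))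
     / Dk r (x k) (g (x k)) (s k) (alpha k) sigma_u.
    rewrite step3 /tau_trial (_ : (_ <= 0) = false); last by rewrite leNgt hD0.
    exact: tau_update_le.
  by rewrite ler_pdivlMr // in ht; rewrite mulrC.
have S0 : 0 < enorm (s k) ^+ 2.
  rewrite exprn_gt0 // lt_def enorm_ge0 andbT; apply/eqP => /enorm_eq0 h.
  by have := (nonterm k).2; rewrite h eqxx.
have bpos : 0 < bnd.
  have h1 : 0 < sigma_u * tau k / alpha k * enorm (s k) ^+ 2.
    apply: mulr_gt0 => //; apply: divr_gt0 => //; apply: mulr_gt0 => //.
    by case/andP: hsu.
  have h2 : 0 <= sigma_c * (enorm (c (x k)) - enorm (c (x k) + J (x k) *m v k)).
    by apply: mulr_ge0 => //; case/andP: hsc => ? _; exact: ltW.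
  rewrite /bnd; lra.
have cl1 : bnd <= dq r (x k) (g (x k)) (c (x k)) (J (x k)) (alpha k) (s k) (tau k).
  rewrite dqE /bnd; lra.
split; first by split.
have hconvr : forall a b l, 0 <= l -> l <= 1 ->
    r (x k + (l * a + (1 - l) * b) *: s k)
    <= l * r (x k + a *: s k) + (1 - l) * r (x k + b *: s k).
  move=> a b l l0 l1.
  have -> : x k + (l * a + (1 - l) * b) *: s k
         = l *: (x k + a *: s k) + (1 - l) *: (x k + b *: s k).
    by apply/matrixP => i j; rewrite !mxE; ring.
  exact: hrc.
have hconvc : forall a b l, 0 <= l -> l <= 1 ->
    enorm (c (x k) + (l * a + (1 - l) * b) *: (J (x k) *m s k))
    <= l * enorm (c (x k) + a *: (J (x k) *m s k))
       + (1 - l) * enorm (c (x k) + b *: (J (x k) *m s k)).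
  move=> a b l l0 l1.
  have -> : c (x k) + (l * a + (1 - l) * b) *: (J (x k) *m s k)
         = l *: (c (x k) + a *: (J (x k) *m s k))
           + (1 - l) *: (c (x k) + b *: (J (x k) *m s k)).
    by apply/matrixP => i j; rewrite !mxE; ring.
  have l1' : 0 <= 1 - l by lra.
  apply: le_trans (@enormD _ _ _ _) _.
  by rewrite !enormZ (ger0_norm l0) (ger0_norm l1').
have [Lr [hLr Lr1]] := @convex_quot R (fun t => r (x k + t *: s k)) hconvr.
have [Lc [hLc Lc1]] := @convex_quot R
   (fun t => enorm (c (x k) + t *: (J (x k) *m s k))) hconvc.
rewrite /= scale0r addr0 in hLr.
rewrite /= scale0r addr0 in hLc.
rewrite /= scale0r addr0 scale1r in Lr1.
rewrite /= scale0r addr0 scale1r in Lc1.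
have hf : (fun t => (f (x k + t *: s k) - f (x k)) / t) @ 0^'+ --> dotv (g (x k)) (s k).
  have hder : derivable f (x k) (s k) by apply: diff_derivable.
  move: hder; rewrite /derivable => /cvg_ex [L hL].
  have LE : L = dotv (g (x k)) (s k).
    by rewrite -hdfg -deriveE // /derive (cvg_lim _ hL).
  apply: cvg_dnbhs_at_right; rewrite -LE.
  have -> : (fun t => (f (x k + t *: s k) - f (x k)) / t) =
      (fun h => h^-1 *: ((f \o shift (x k)) (h *: s k) - f (x k))).
    by apply/funext => t /=; rewrite [x k + _]addrC mulrC.
  exact: hL.
have hc' : (fun h => h^-1 *: (c (h *: s k + x k) - c (x k))) @ 0^'+ --> J (x k) *m s k.
  have hder : derivable c (x k) (s k) by apply: diff_derivable.
  move: hder; rewrite /derivable => /cvg_ex [L hL].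
  have LE : L = J (x k) *m s k.
    by rewrite -hdcJ -deriveE // /derive (cvg_lim _ hL).
  apply: cvg_dnbhs_at_right; rewrite -LE; exact: hL.
have he : (fun t => (enorm (c (x k + t *: s k)) - enorm (c (x k) + t *: (J (x k) *m s k))) / t)
     @ 0^'+ --> 0.
  apply/cvgrPdist_lt => eps eps0.
  have m1 : 0 < (m%:R : R) + 1 by have := ler0n R m; lra.
  have eps'0 : 0 < eps / (m%:R + 1) by apply: divr_gt0.
  have meps : (m%:R : R) * (eps / (m%:R + 1)) < eps.
    rewrite mulrA ltr_pdivrMr //; have := ler0n R m; nra.
  move/cvgrPdist_lt : hc' => /(_ _ eps'0) hn.
  near=> t.
  have tp : 0 < t by near: t; exact: nbhs_right_gt.
  have ht : `|J (x k) *m s k - t^-1 *: (c (t *: s k + x k) - c (x k))| < eps / (m%:R + 1).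
    by near: t; exact: hn.
  rewrite sub0r normrN normrM (gtr0_norm (_ : 0 < t^-1)); last by rewrite invr_gt0.
  rewrite ltr_pdivrMr //.
  set A := c (x k + t *: s k); set B := c (x k) + t *: (J (x k) *m s k).
  set Dv := t^-1 *: (c (t *: s k + x k) - c (x k)) in ht.
  have hdist := @enorm_dist _ _ A B.
  have AB : A - B = t *: (Dv - J (x k) *m s k).
    rewrite scalerBr /Dv scalerA mulfV ?gt_eqF // scale1r /A /B [x k + _]addrC.
    by rewrite opprD addrA.
  rewrite AB enormZ (gtr0_norm tp) in hdist.
  have hY : enorm (Dv - J (x k) *m s k) < eps.
    apply: le_lt_trans (@enorm_le_mx _ _ _) _.
    rewrite distrC; apply: le_lt_trans meps.
    by apply: ler_wpM2l; [exact: ler0n | exact: ltW].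
  by apply: le_lt_trans hdist _; rewrite [eps * t]mulrC ltr_pM2l.
exists (tau k * dotv (g (x k)) (s k) + tau k * Lr + Lc + 0).
split.
  have -> : (fun t => (merit f r c (tau k) (x k + t *: s k) - merit f r c (tau k) (x k)) / t) =
   (fun t => tau k * ((f (x k + t *: s k) - f (x k)) / t)
     + tau k * ((r (x k + t *: s k) - r (x k)) / t)
     + (enorm (c (x k) + t *: (J (x k) *m s k)) - enorm (c (x k))) / t
     + (enorm (c (x k + t *: s k)) - enorm (c (x k) + t *: (J (x k) *m s k))) / t).
    by apply/funext => t; rewrite /merit; ring.
  apply: cvgD; last exact: he.
  apply: cvgD; last exact: hLc.
  by apply: cvgD; apply: cvgMl_tmp; [exact: hf | exact: hLr].
have hrL : tau k * Lr <= tau k * (r (x k + s k) - r (x k)) by rewrite ler_pM2l.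
have hq : 0 <= tau k * (enorm (s k) ^+ 2 / (2 * alpha k)).
  by apply: mulr_ge0; [exact: ltW | apply: divr_ge0; [exact: ltW | lra]].
move: cl1; rewrite /dq => cl1.
split; lra.
Unshelve. all: by end_near.
Qed.
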